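(* Let $N\ge2$, $q\in\mathbb{C}^\times$ generic, $s=(s_1,\dots,s_{N-1})$ generic, $x_a=2s_a-2s_{a-1}$ ($s_0=s_N=0$) and $w_{ab}=q^{x_a-x_b}$. Define $R(z,s)=\sum R_{i_1i_2}^{j_1j_2}E_{i_1j_1}\otimes E_{i_2j_2}\in\mathrm{End}(\mathbb{C}^N)^{\otimes2}$ whose only non-vanishing entries are ($1\le a,b\le N$, $a\neq b$ in the last two) $$R_{aa}^{aa}=\rho(z),\quad R_{ab}^{ab}=\rho(z)\begin{cases}\dfrac{q(1-z)}{1-q^2z}& b>a,\\[2mm] \dfrac{q(1-z)}{1-q^2z}\,\dfrac{(1-w_{ab}q^2)(1-w_{ab}q^{-2})}{(1-w_{ab})^2}& b<a,\end{cases}\quad R_{ab}^{ba}=\rho(z)\frac{(1-q^2)(1-w_{ab}z)}{(1-q^2z)(1-w_{ab})},$$ with $\rho(z)=q^{-\frac{N-1}{N}}\dfrac{(q^2z;q^{2N})_\infty(q^{2N-2}z;q^{2N})_\infty}{(z;q^{2N})_\infty(q^{2N}z;q^{2N})_\infty}$. Then $R$ (the evaluated $R$-matrix of the dynamical twist $\mathcal{U}_{q,\lambda}(\widehat{sl}_N)$ of $\mathcal{U}_q(\widehat{sl}_N)$) satisfies the dynamical Yang--Baxter equation with multiplicative spectral parameter $$R_{12}(z,s+h^{(3)})\,R_{13}(zz',s)\,R_{23}(z',s+h^{(1)})=R_{23}(z',s)\,R_{13}(zz',s+h^{(2)})\,R_{12}(z,s).$$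
   Context: $E_{ab}$ is the $N\times N$ elementary matrix; $(x;p)_\infty=\prod_{n\ge0}(1-xp^n)$. Shift notation: with $h_j=E_{jj}-E_{j+1,j+1}$, $(d_{ij})$ the inverse Cartan matrix of $sl_N$ and $h^\vee_i=\sum_j d_{ij}h_j$, the expression $R_{12}(z,s+h^{(3)})$ means $R_{12}(z,s)$ with each $s_i$ replaced by $s_i+h^\vee_i$ acting (diagonally) in the third tensor factor of $(\mathbb{C}^N)^{\otimes 3}$; similarly for $h^{(1)},h^{(2)}$. *)

(* Defs.v *)
From HB Require Import structures.
From mathcomp Require Import all_boot all_order all_algebra.
From mathcomp Require Import complex.
From mathcomp Require Import all_classical all_reals all_analysis.

Set Implicit Arguments.
Unset Strict Implicit.
Unset Printing Implicit Defensive.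

Import Order.TTheory GRing.Theory Num.Theory.
Import numFieldNormedType.Exports.
Local Open Scope ring_scope.
Local Open Scope complex_scope.

Section Defs.
Variable R : realType.
Local Notation C := (R[i]).

Definition cexp (z : C) : C :=
  (expR (@complex.Re R z))%:C * ((cos (@complex.Im R z))%:C + 'i * (sin (@complex.Im R z))%:C).

(* complex power q^x with q = cexp tau (tau a fixed logarithm of q) *)
Definition cpow (tau x : C) : C := cexp (tau * x).

Definition cconv (u : nat -> C) (L : C) : Prop :=
  forall e : R, 0 < e -> exists M : nat, forall n : nat, (M <= n)%N -> `|u n - L| < e%:C.

Definition qpoch (x p : C) : C :=
  xget 0 [set L | cconv (fun n : nat => \prod_(k < n) (1 - x * p ^+ k)) L].

Definition rho (N : nat) (tau z : C) : C :=
  let q := cexp tau in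
  let p := q ^+ (2 * N) in
  cpow tau (- ((N - 1)%:R / N%:R)) *
  (qpoch (q ^+ 2 * z) p * qpoch (q ^+ (2 * N - 2) * z) p)
  / (qpoch z p * qpoch (p * z) p).

(* s = (s_1,...,s_{N-1}) is given as s : 'I_(N-1) -> C, where s i = s_{i+1};
   extended by s_0 = s_N = 0 (and 0 outside 1..N-1). *)
Definition sext (N : nat) (s : 'I_(N - 1) -> C) (k : nat) : C :=
  if (0 < k)%N then
    (if insub k.-1 is Some i then s i else 0)
  else 0.

(* x_a = 2 s_a - 2 s_{a-1}, for a = 1..N (a : 'I_N stands for a+1) *)
Definition xcoord (N : nat) (s : 'I_(N - 1) -> C) (a : 'I_N) : C :=
  2 * sext s a.+1 - 2 * sext s a.

Definition wdyn (N : nat) (tau : C) (s : 'I_(N - 1) -> C) (a b : 'I_N) : C :=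
  cpow tau (xcoord s a - xcoord s b).

Definition Rent (N : nat) (tau z : C) (s : 'I_(N - 1) -> C)
    (i1 i2 j1 j2 : 'I_N) : C :=
  let q := cexp tau in
  let w := wdyn tau s i1 i2 in
  if i1 == i2 then
    (if (j1 == i1) && (j2 == i1) then rho N tau z else 0)
  else if (j1 == i1) && (j2 == i2) then
    (if (i1 < i2)%N then rho N tau z * (q * (1 - z) / (1 - q ^+ 2 * z))
     else rho N tau z * (q * (1 - z) / (1 - q ^+ 2 * z)) *
          ((1 - w * q ^+ 2) * (1 - w * q ^- 2) / (1 - w) ^+ 2))
  else if (j1 == i2) && (j2 == i1) then
    rho N tau z * ((1 - q ^+ 2) * (1 - w * z) / ((1 - q ^+ 2 * z) * (1 - w)))
  else 0.

Definition cartan_inv (N i j : nat) : C :=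
  (minn i j)%:R - (i * j)%:R / N%:R.

(* eigenvalue of h_j = E_{jj} - E_{j+1,j+1} on the basis vector e_c *)
Definition hval (j c : nat) : C := (j == c)%:R - (j.+1 == c)%:R.

(* eigenvalue of h^vee_i = sum_j d_{ij} h_j on e_c *)
Definition hvee (N i c : nat) : C :=
  \sum_(1 <= j < N) cartan_inv N i j * hval j c.

(* s + h^vee evaluated on the basis vector e_{c+1}: s_i |-> s_i + <h^vee_i, e_c> *)
Definition sshift (N : nat) (s : 'I_(N - 1) -> C) (c : 'I_N) : 'I_(N - 1) -> C :=
  fun i => s i + hvee N i.+1 c.+1.

(* operators on (C^N)^{(x)3}, as matrices indexed by triples of basis indices *)
Definition idx3 (N : nat) := ('I_N * 'I_N * 'I_N)%type.
Definition op3 (N : nat) := idx3 N -> idx3 N -> C.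

Definition mul3 (N : nat) (A B : op3 N) : op3 N :=
  fun I J => \sum_(K : idx3 N) A I K * B K J.

(* R_{12}(z, s + h^{(3)}) (shifted) or R_{12}(z, s) (unshifted) *)
Definition R12 (N : nat) (tau z : C) (s : 'I_(N - 1) -> C) (sh : bool) : op3 N :=
  fun I J =>
    let: (i1, i2, i3) := I in let: (j1, j2, j3) := J in
    (i3 == j3)%:R * Rent tau z (if sh then sshift s i3 else s) i1 i2 j1 j2.

(* R_{13}(z, s + h^{(2)}) (shifted) or R_{13}(z, s) *)
Definition R13 (N : nat) (tau z : C) (s : 'I_(N - 1) -> C) (sh : bool) : op3 N :=
  fun I J =>
    let: (i1, i2, i3) := I in let: (j1, j2, j3) := J in
    (i2 == j2)%:R * Rent tau z (if sh then sshift s i2 else s) i1 i3 j1 j3.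

(* R_{23}(z, s + h^{(1)}) (shifted) or R_{23}(z, s) *)
Definition R23 (N : nat) (tau z : C) (s : 'I_(N - 1) -> C) (sh : bool) : op3 N :=
  fun I J =>
    let: (i1, i2, i3) := I in let: (j1, j2, j3) := J in
    (i1 == j1)%:R * Rent tau z (if sh then sshift s i1 else s) i2 i3 j2 j3.

End Defs.

(* Main.v *)
Require Import Defs.
From HB Require Import structures.
From mathcomp Require Import all_boot all_order all_algebra.
From mathcomp Require Import complex.
From mathcomp Require Import all_classical all_reals all_analysis.
From mathcomp Require Import ring lra zify.
Import Order.TTheory GRing.Theory Num.Theory.
Local Open Scope ring_scope.
Local Open Scope complex_scope.

Section S.
Variable R : realType.
Local Notation C := (R[i]).

Lemma cexpD (a b : C) : cexp (a + b) = cexp a * cexp b.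
Proof.
case: a => a1 a2; case: b => b1 b2; rewrite /cexp /=.
rewrite expRD cosD sinD.
apply/eqP; rewrite eq_complex /=; apply/andP; split; apply/eqP; ring.
Qed.

Lemma cexp0 : cexp 0 = 1 :> C.
Proof. rewrite /cexp /= expR0 cos0 sin0; apply/eqP; rewrite eq_complex /=; apply/andP; split; apply/eqP; ring. Qed.

Lemma cexpN (a : C) : cexp (- a) = (cexp a)^-1.
Proof.
have h : cexp (- a) * cexp a = 1 by rewrite -cexpD addNr cexp0.
have nz : cexp a != 0.
  apply/negP=> /eqP e; move: h; rewrite e mulr0 => /eqP; by rewrite eq_sym oner_eq0.
by rewrite -[LHS]mulr1 -(mulfV nz) mulrA h mul1r.
Qed.

Lemma cexp_neq0 (a : C) : cexp a != 0.
Proof.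
apply/negP=> /eqP e.
have : cexp a * cexp (- a) = 1 by rewrite -cexpD subrr cexp0.
by rewrite e mul0r => /eqP; rewrite eq_sym oner_eq0.
Qed.

Lemma sum_delta (F : nat -> C) (m n k : nat) :
  \sum_(m <= j < n) F j * (j == k)%:R = if (m <= k < n)%N then F k else 0.
Proof.
elim: n => [|n IH]; first by rewrite big_geq // ltn0 andbF.
case: (leqP m n) => hmn.
  rewrite big_nat_recr //= IH.
  case: (eqVneq n k) => [<-|nk]; first by rewrite mulr1 ltnn andbF add0r hmn ltnSn.
  rewrite mulr0 addr0; congr (if _ then _ else _); apply/idP/idP; move: nk => /eqP; lia.
rewrite big_geq //; case: ifP => //; lia.
Qed.

Variable N : nat.
Hypothesis N2 : (2 <= N)%N.

Lemma NR0 : (N%:R : C) != 0.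
Proof. by rewrite pnatr_eq0 -lt0n; lia. Qed.

Lemma hveeE (i c : nat) : (0 < i < N)%N -> (c < N)%N ->
  hvee R N i c.+1 = (c < i)%:R - i%:R / N%:R :> C.
Proof.
move=> /andP[i0 iN] cN; have nz := NR0.
rewrite /hvee.
under eq_bigr => j _ do rewrite /hval eqSS mulrBr.
rewrite sumrB !sum_delta /cartan_inv.
case: c cN => [|c] cN.
  rewrite N2 /= (minn_idPr i0) muln1 i0 subr0 //.
rewrite /= cN.
case: (ltnP c.+2 N) => h /=.
  case: (ltnP c.+2 i) => hci.
    rewrite ?(minn_idPr (ltnW hci)) ?(minn_idPr (ltnW (ltnW hci))) (ltnW hci) !natrM -!natr1; field; exact: nz.
  case: (ltnP c.+1 i) => hci2.
    have e : i = c.+2 by lia.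
    rewrite ?hci2 ?(minn_idPr (ltnW hci2)) e !natrM -!natr1; field; exact: nz.
  rewrite ?(minn_idPl hci2) !natrM -!natr1 /=; field; exact: nz.
rewrite ltnNge (_ : (i <= c.+1)%N = true); last by lia.
rewrite (minn_idPl (_ : (i <= c.+1)%N)); last by lia.
have eN : N = c.+2 by lia.
rewrite eN !natrM -!natr1 in nz *; rewrite /=; field; exact: nz.
Qed.

Variable tau : C.
Variable s : 'I_(N - 1) -> C.

Lemma sext_shift (c : 'I_N) (k : nat) : (k <= N)%N ->
  sext (sshift s c) k = sext s k + ((c < k)%:R - k%:R / N%:R).
Proof.
move=> kN; have nz := NR0; rewrite /sext; case: k kN => [|k] kN /=.
  by rewrite mul0r subr0 addr0.
case: insubP => [i ki ei|nk].
  rewrite /sshift ei hveeE //; apply/andP; split => //; move: ki; lia.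
have -> : k.+1 = N by move: nk; lia.
by rewrite (ltn_ord c) divff // subrr addr0.
Qed.

Lemma xcoord_shift (c a : 'I_N) :
  xcoord (sshift s c) a = xcoord s a + 2 * (c == a)%:R - 2 / N%:R.
Proof.
rewrite /xcoord !sext_shift ?(ltn_ord a) ?(ltnW (ltn_ord a)) //.
have -> : (c < a.+1)%:R = (c < a)%:R + (c == a)%:R :> C.
  rewrite ltnS; case: (ltngtP c a) => h.
  - rewrite (_ : (c == a) = false) ?addr0 //; apply/eqP => e; by rewrite e ltnn in h.
  - rewrite (_ : (c == a) = false) ?addr0 //; apply/eqP => e; by rewrite e ltnn in h.
  - have e : c = a by apply: val_inj.
    by rewrite e eqxx add0r.
rewrite -natr1; ring.
Qed.

Definition y (a : 'I_N) := cexp (tau * xcoord s a).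
Definition ee (b : bool) : C := if b then cexp tau ^+ 2 else 1.

Lemma wdynE (a b : 'I_N) : wdyn tau s a b = y a / y b.
Proof. by rewrite /wdyn /cpow mulrBr cexpD cexpN. Qed.

Lemma cexp2 (b : bool) : cexp (tau * (2 * b%:R)) = ee b.
Proof.
case: b => /=.
  by rewrite (_ : tau * (2 * 1%:R) = tau + tau) ?cexpD ?expr2 //; ring.
by rewrite (_ : tau * (2 * 0%:R) = 0) ?cexp0 //; ring.
Qed.

Lemma wdynSE (c a b : 'I_N) :
  wdyn tau (sshift s c) a b = y a * ee (c == a) / (y b * ee (c == b)).
Proof.
rewrite /wdyn /cpow !xcoord_shift.
rewrite (_ : tau * _ = (tau * xcoord s a + tau * (2 * (c == a)%:R)) +
   - (tau * xcoord s b + tau * (2 * (c == b)%:R))); last by ring.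
by rewrite cexpD cexpN !cexpD !cexp2.
Qed.

Lemma y_neq0 a : y a != 0. Proof. exact: cexp_neq0. Qed.

Fact Ra_key : unit. Proof. exact: tt. Qed.
Fact Rb_key : unit. Proof. exact: tt. Qed.
Definition Ra_def z t (i1 i2 : 'I_N) :=
  if i1 == i2 then rho N tau z else Rent tau z t i1 i2 i1 i2.
Definition Rb_def z t (i1 i2 : 'I_N) :=
  if i1 == i2 then 0 else Rent tau z t i1 i2 i2 i1.

Definition Ra := locked_with Ra_key Ra_def.
Definition Rb := locked_with Rb_key Rb_def.
Lemma RaE : Ra = Ra_def. Proof. by rewrite /Ra; case: Ra_key. Qed.
Lemma RbE : Rb = Rb_def. Proof. by rewrite /Rb; case: Rb_key. Qed.

Lemma Rent_dec z t (i1 i2 j1 j2 : 'I_N) : Rent tau z t i1 i2 j1 j2 =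
  ((j1 == i1) && (j2 == i2))%:R * Ra z t i1 i2 +
  ((j1 == i2) && (j2 == i1))%:R * Rb z t i1 i2.
Proof.
rewrite RaE RbE /Ra_def /Rb_def; case: (eqVneq i1 i2) => [<-|ne].
  rewrite /Rent eqxx; case: ((j1 == i1) && (j2 == i1)) => /=;
  by rewrite ?mul1r ?mul0r ?mulr0 ?addr0.
case hb1: ((j1 == i1) && (j2 == i2)).
  move/andP: hb1 => [/eqP -> /eqP ->].
  by rewrite (negbTE ne) /= mul1r mul0r addr0.
case hb2: ((j1 == i2) && (j2 == i1)).
  move/andP: hb2 => [/eqP e1 /eqP e2]; subst.
  by rewrite /= mul0r add0r mul1r.
by rewrite /Rent (negbTE ne) hb1 hb2 /= !mul0r addr0.
Qed.

Lemma R12E z t sh (i1 i2 i3 : 'I_N) K :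
  R12 tau z t sh (i1, i2, i3) K =
  (K == (i1, i2, i3))%:R * Ra z (if sh then sshift t i3 else t) i1 i2 +
  (K == (i2, i1, i3))%:R * Rb z (if sh then sshift t i3 else t) i1 i2.
Proof.
case: K => [[k1 k2] k3]; rewrite /R12 /= Rent_dec !xpair_eqE (eq_sym i3 k3).
case: (k1 == i1); case: (k1 == i2); case: (k2 == i1); case: (k2 == i2); case: (k3 == i3) => /=;
by rewrite ?mul0r ?mul1r ?addr0 ?add0r.
Qed.

Lemma R13E z t sh (i1 i2 i3 : 'I_N) K :
  R13 tau z t sh (i1, i2, i3) K =
  (K == (i1, i2, i3))%:R * Ra z (if sh then sshift t i2 else t) i1 i3 +
  (K == (i3, i2, i1))%:R * Rb z (if sh then sshift t i2 else t) i1 i3.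
Proof.
case: K => [[k1 k2] k3]; rewrite /R13 /= Rent_dec !xpair_eqE (eq_sym i2 k2).
case: (k1 == i1); case: (k1 == i3); case: (k3 == i1); case: (k3 == i3); case: (k2 == i2) => /=;
by rewrite ?mul0r ?mul1r ?addr0 ?add0r.
Qed.

Lemma R23E z t sh (i1 i2 i3 : 'I_N) K :
  R23 tau z t sh (i1, i2, i3) K =
  (K == (i1, i2, i3))%:R * Ra z (if sh then sshift t i1 else t) i2 i3 +
  (K == (i1, i3, i2))%:R * Rb z (if sh then sshift t i1 else t) i2 i3.
Proof.
case: K => [[k1 k2] k3]; rewrite /R23 /= Rent_dec !xpair_eqE (eq_sym i1 k1).
case: (k2 == i2); case: (k2 == i3); case: (k3 == i2); case: (k3 == i3); case: (k1 == i1) => /=;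
by rewrite ?mul0r ?mul1r ?addr0 ?add0r.
Qed.

Lemma sum_ind (T : finType) (u : T) (F : T -> C) :
  \sum_(K : T) (K == u)%:R * F K = F u.
Proof.
rewrite (bigD1 u) //= eqxx mul1r big1 ?addr0 // => K /negbTE ->; by rewrite mul0r.
Qed.

Lemma mul3_dec (A B : op3 R N) I J u v a b :
  (forall K, A I K = (K == u)%:R * a + (K == v)%:R * b) ->
  mul3 A B I J = a * B u J + b * B v J.
Proof.
move=> hA; rewrite /mul3.
rewrite (eq_bigr (fun K => (K == u)%:R * (a * B K J) + (K == v)%:R * (b * B K J))); last first.
  by move=> K _; rewrite hA mulrDl !mulrA.
by rewrite big_split /= !sum_ind.
Qed.

Arguments mul3_dec {A B I J u v a b}.

Lemma mul3A (A B D : op3 R N) I J : mul3 (mul3 A B) D I J = mul3 A (mul3 B D) I J.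
Proof.
rewrite /mul3; under eq_bigr do rewrite big_distrl.
rewrite exchange_big; apply: eq_bigr => L _; rewrite big_distrr.
by apply: eq_bigr => K _ /=; rewrite mulrA.
Qed.

Lemma cmp (a b : 'I_N) : (a < b)%N ->
  [/\ (a == b) = false, (b == a) = false, (a < b)%N = true & (b < a)%N = false].
Proof.
move=> h; split => //.
- by apply/eqP => e; rewrite e ltnn in h.
- by apply/eqP => e; rewrite e ltnn in h.
- by apply/negbTE; rewrite -leqNgt ltnW.
Qed.
Arguments cmp {a b}.

Section Gen.
Hypothesis Hw : forall a b : 'I_N, a != b ->
     wdyn tau s a b != 1 /\ (forall c : 'I_N, wdyn tau (sshift s c) a b != 1).

Lemma L0 a b : a != b -> y a - y b != 0.
Proof.
move=> ne; have [H _] := Hw a b ne; move: H; rewrite wdynE; apply: contra.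
by rewrite subr_eq0 => /eqP ->; rewrite divff ?y_neq0.
Qed.

Lemma L1 a b : a != b -> y a * cexp tau ^+ 2 - y b != 0.
Proof.
move=> ne; have [_ /(_ a)] := Hw a b ne; rewrite wdynSE /ee eqxx (negbTE ne) mulr1.
by apply: contra; rewrite subr_eq0 => /eqP ->; rewrite divff ?y_neq0.
Qed.

Lemma L2 a b : a != b -> y a - y b * cexp tau ^+ 2 != 0.
Proof.
move=> ne; have [_ /(_ b)] := Hw a b ne; rewrite wdynSE /ee eqxx (eq_sym b a) (negbTE ne) mulr1.
apply: contra; rewrite subr_eq0 => /eqP ->; rewrite divff //.
by rewrite mulf_neq0 ?y_neq0 // expf_neq0 // cexp_neq0.
Qed.
End Gen.

Arguments rho : simpl never.
Arguments wdyn : simpl never.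
Arguments y : simpl never.
Arguments cexp : simpl never.
Arguments sshift : simpl never.

Ltac simpb := repeat match goal with
  | h : @eq (ordinal _) _ _ |- _ => rewrite h
  | h : (_ == _) = _ |- _ => rewrite h
  | h : (_ < _)%N = _ |- _ => rewrite h
  end.

Ltac prep := repeat match goal with
  | h : is_true (?a < ?b)%N |- _ => case: (cmp h) => ? ? ? ?; clear h
  | h : ?a = ?a |- _ => clear h
  | h : nat_of_ord ?a = nat_of_ord ?b |- _ =>
      have := (val_inj h : a = b :> 'I_N); clear h; move=> h
  end.

Ltac disch1 := match goal with
 | |- is_true true => exact isT
 | h : is_true ?g |- is_true ?g => exact h
 | h : forall x : _, is_true (?Yf x != 0) |- is_true (?Yf _ != 0) => apply h
 | h : forall x y : _, is_true (x != y) -> is_true (?Yf x - ?Yf y != 0)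
   |- is_true (?Yf _ - ?Yf _ != 0) => apply h; by simpb
 | h : forall x y : _, is_true (x != y) -> is_true (?Yf x * ?Q - ?Yf y != 0)
   |- is_true (?Yf _ * ?Q - ?Yf _ != 0) => apply h; by simpb
 | h : forall x y : _, is_true (x != y) -> is_true (?Yf x - ?Yf y * ?Q != 0)
   |- is_true (?Yf _ - ?Yf _ * ?Q != 0) => apply h; by simpb
 end.

Ltac disch := repeat (apply/andP; split); disch1.

Ltac fin :=
  (repeat match goal with h : @eq (ordinal _) _ _, n : is_true (_ != _) |- _ => rewrite h in n end);
  first [ match goal with n : is_true (?x != ?x) |- _ => by rewrite eqxx in n end | idtac ];
  rewrite ?xpair_eqE ?eqxx; simpb; rewrite ?eqxx /=;
  rewrite ?(mul0r, mulr0, add0r, addr0, mul1r, mulr1);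
  rewrite ?RaE ?RbE; unfold Ra_def, Rb_def, Rent; simpb; rewrite ?eqxx ?ltnn /=; simpb; rewrite ?eqxx ?ltnn /=;
  rewrite ?wdynSE ?wdynE /ee; simpb; rewrite ?eqxx /= ?mulr1;
  (repeat match goal with |- context [rho ?n ?t ?w] => move: (rho n t w) => ? end);
  (repeat match goal with h : is_true (1 - _ != 0) |- _ => revert h end);
  match goal with Hw0 : forall a b : 'I_N, _ |- _ =>
    have := L0 Hw0; have := L1 Hw0; have := L2 Hw0 end;
  have := y_neq0; have := cexp_neq0 tau;
  generalize y; intro; generalize (cexp tau); intros;
  field; disch.

Lemma facts (a b : 'I_N) : (a < b)%N ->
  [/\ (a == b) = false, (b == a) = false & (b < a)%N = false].
Proof.
move=> h; split.
- by apply/eqP => e; rewrite e ltnn in h.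
- by apply/eqP => e; rewrite e ltnn in h.
- by apply/negbTE; rewrite -leqNgt ltnW.
Qed.

Arguments facts {a b}.

Lemma key1 z z' (i1 i2 i3 : 'I_N) (J : idx3 N) :
  (forall a b : 'I_N, a != b ->
     wdyn tau s a b != 1 /\ (forall c : 'I_N, wdyn tau (sshift s c) a b != 1)) ->
  1 - cexp tau ^+ 2 * z != 0 -> 1 - cexp tau ^+ 2 * z' != 0 -> 1 - cexp tau ^+ 2 * (z * z') != 0 ->
  (i1 < i2)%N -> (i1 < i3)%N -> (i2 < i3)%N ->
    mul3 (mul3 (R12 tau z s true) (R13 tau (z * z') s false)) (R23 tau z' s true) (i1, i2, i3) J
    = mul3 (mul3 (R23 tau z' s false) (R13 tau (z * z') s true)) (R12 tau z s false) (i1, i2, i3) J.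
Proof.
move=> Hw Hz Hz' Hzz h12 h13 h23.
rewrite !mul3A.
rewrite (mul3_dec (R12E _ _ _ _ _ _)).
rewrite (mul3_dec (R13E _ _ _ _ _ _)).
rewrite (mul3_dec (R13E _ _ _ _ _ _)).
rewrite !R23E.
rewrite (mul3_dec (R23E _ _ _ _ _ _)).
rewrite (mul3_dec (R13E _ _ _ _ _ _)).
rewrite (mul3_dec (R13E _ _ _ _ _ _)).
rewrite !R12E /=.
prep.
have [?|n1] := eqVneq J (i1, i2, i3); [|
have [?|n2] := eqVneq J (i1, i3, i2); [|
have [?|n3] := eqVneq J (i2, i1, i3); [|
have [?|n4] := eqVneq J (i2, i3, i1); [|
have [?|n5] := eqVneq J (i3, i1, i2); [|
have [?|n6] := eqVneq J (i3, i2, i1); [|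
 by (repeat match goal with h : @eq (ordinal _) _ _, n : is_true (_ != _) |- _ => rewrite h in n end);
    (repeat match goal with n : is_true (_ != _) |- _ => rewrite (negbTE n) end);
    rewrite /= !(mul0r, mulr0, addr0, add0r)
 ]]]]]].
all: subst J.
1: fin. 1: fin. 1: fin. 1: fin. 1: fin. 1: fin.
Qed.

Lemma key2 z z' (i1 i2 i3 : 'I_N) (J : idx3 N) :
  (forall a b : 'I_N, a != b ->
     wdyn tau s a b != 1 /\ (forall c : 'I_N, wdyn tau (sshift s c) a b != 1)) ->
  1 - cexp tau ^+ 2 * z != 0 -> 1 - cexp tau ^+ 2 * z' != 0 -> 1 - cexp tau ^+ 2 * (z * z') != 0 ->
  (i1 < i2)%N -> (i1 < i3)%N -> (i3 < i2)%N ->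
    mul3 (mul3 (R12 tau z s true) (R13 tau (z * z') s false)) (R23 tau z' s true) (i1, i2, i3) J
    = mul3 (mul3 (R23 tau z' s false) (R13 tau (z * z') s true)) (R12 tau z s false) (i1, i2, i3) J.
Proof.
move=> Hw Hz Hz' Hzz h12 h13 h23.
rewrite !mul3A.
rewrite (mul3_dec (R12E _ _ _ _ _ _)).
rewrite (mul3_dec (R13E _ _ _ _ _ _)).
rewrite (mul3_dec (R13E _ _ _ _ _ _)).
rewrite !R23E.
rewrite (mul3_dec (R23E _ _ _ _ _ _)).
rewrite (mul3_dec (R13E _ _ _ _ _ _)).
rewrite (mul3_dec (R13E _ _ _ _ _ _)).
rewrite !R12E /=.
prep.
have [?|n1] := eqVneq J (i1, i2, i3); [|
have [?|n2] := eqVneq J (i1, i3, i2); [|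
have [?|n3] := eqVneq J (i2, i1, i3); [|
have [?|n4] := eqVneq J (i2, i3, i1); [|
have [?|n5] := eqVneq J (i3, i1, i2); [|
have [?|n6] := eqVneq J (i3, i2, i1); [|
 by (repeat match goal with h : @eq (ordinal _) _ _, n : is_true (_ != _) |- _ => rewrite h in n end);
    (repeat match goal with n : is_true (_ != _) |- _ => rewrite (negbTE n) end);
    rewrite /= !(mul0r, mulr0, addr0, add0r)
 ]]]]]].
all: subst J.
1: fin. 1: fin. 1: fin. 1: fin. 1: fin. 1: fin.
Qed.

Lemma key3 z z' (i1 i2 i3 : 'I_N) (J : idx3 N) :
  (forall a b : 'I_N, a != b ->
     wdyn tau s a b != 1 /\ (forall c : 'I_N, wdyn tau (sshift s c) a b != 1)) ->
  1 - cexp tau ^+ 2 * z != 0 -> 1 - cexp tau ^+ 2 * z' != 0 -> 1 - cexp tau ^+ 2 * (z * z') != 0 ->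
  (i1 < i2)%N -> (i1 < i3)%N -> (i2 : nat) = i3 ->
    mul3 (mul3 (R12 tau z s true) (R13 tau (z * z') s false)) (R23 tau z' s true) (i1, i2, i3) J
    = mul3 (mul3 (R23 tau z' s false) (R13 tau (z * z') s true)) (R12 tau z s false) (i1, i2, i3) J.
Proof.
move=> Hw Hz Hz' Hzz h12 h13 h23.
rewrite !mul3A.
rewrite (mul3_dec (R12E _ _ _ _ _ _)).
rewrite (mul3_dec (R13E _ _ _ _ _ _)).
rewrite (mul3_dec (R13E _ _ _ _ _ _)).
rewrite !R23E.
rewrite (mul3_dec (R23E _ _ _ _ _ _)).
rewrite (mul3_dec (R13E _ _ _ _ _ _)).
rewrite (mul3_dec (R13E _ _ _ _ _ _)).
rewrite !R12E /=.
prep.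
have [?|n1] := eqVneq J (i1, i2, i3); [|
have [?|n2] := eqVneq J (i1, i3, i2); [|
have [?|n3] := eqVneq J (i2, i1, i3); [|
have [?|n4] := eqVneq J (i2, i3, i1); [|
have [?|n5] := eqVneq J (i3, i1, i2); [|
have [?|n6] := eqVneq J (i3, i2, i1); [|
 by (repeat match goal with h : @eq (ordinal _) _ _, n : is_true (_ != _) |- _ => rewrite h in n end);
    (repeat match goal with n : is_true (_ != _) |- _ => rewrite (negbTE n) end);
    rewrite /= !(mul0r, mulr0, addr0, add0r)
 ]]]]]].
all: subst J.
1: fin. 1: fin. 1: fin. 1: fin. 1: fin. 1: fin.
Qed.

Lemma key4 z z' (i1 i2 i3 : 'I_N) (J : idx3 N) :
  (forall a b : 'I_N, a != b ->
     wdyn tau s a b != 1 /\ (forall c : 'I_N, wdyn tau (sshift s c) a b != 1)) ->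
  1 - cexp tau ^+ 2 * z != 0 -> 1 - cexp tau ^+ 2 * z' != 0 -> 1 - cexp tau ^+ 2 * (z * z') != 0 ->
  (i1 < i2)%N -> (i3 < i1)%N -> (i3 < i2)%N ->
    mul3 (mul3 (R12 tau z s true) (R13 tau (z * z') s false)) (R23 tau z' s true) (i1, i2, i3) J
    = mul3 (mul3 (R23 tau z' s false) (R13 tau (z * z') s true)) (R12 tau z s false) (i1, i2, i3) J.
Proof.
move=> Hw Hz Hz' Hzz h12 h13 h23.
rewrite !mul3A.
rewrite (mul3_dec (R12E _ _ _ _ _ _)).
rewrite (mul3_dec (R13E _ _ _ _ _ _)).
rewrite (mul3_dec (R13E _ _ _ _ _ _)).
rewrite !R23E.
rewrite (mul3_dec (R23E _ _ _ _ _ _)).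
rewrite (mul3_dec (R13E _ _ _ _ _ _)).
rewrite (mul3_dec (R13E _ _ _ _ _ _)).
rewrite !R12E /=.
prep.
have [?|n1] := eqVneq J (i1, i2, i3); [|
have [?|n2] := eqVneq J (i1, i3, i2); [|
have [?|n3] := eqVneq J (i2, i1, i3); [|
have [?|n4] := eqVneq J (i2, i3, i1); [|
have [?|n5] := eqVneq J (i3, i1, i2); [|
have [?|n6] := eqVneq J (i3, i2, i1); [|
 by (repeat match goal with h : @eq (ordinal _) _ _, n : is_true (_ != _) |- _ => rewrite h in n end);
    (repeat match goal with n : is_true (_ != _) |- _ => rewrite (negbTE n) end);
    rewrite /= !(mul0r, mulr0, addr0, add0r)
 ]]]]]].
all: subst J.
1: fin. 1: fin. 1: fin. 1: fin. 1: fin. 1: fin.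
Qed.

Lemma key5 z z' (i1 i2 i3 : 'I_N) (J : idx3 N) :
  (forall a b : 'I_N, a != b ->
     wdyn tau s a b != 1 /\ (forall c : 'I_N, wdyn tau (sshift s c) a b != 1)) ->
  1 - cexp tau ^+ 2 * z != 0 -> 1 - cexp tau ^+ 2 * z' != 0 -> 1 - cexp tau ^+ 2 * (z * z') != 0 ->
  (i1 < i2)%N -> (i1 : nat) = i3 -> (i3 < i2)%N ->
    mul3 (mul3 (R12 tau z s true) (R13 tau (z * z') s false)) (R23 tau z' s true) (i1, i2, i3) J
    = mul3 (mul3 (R23 tau z' s false) (R13 tau (z * z') s true)) (R12 tau z s false) (i1, i2, i3) J.
Proof.
move=> Hw Hz Hz' Hzz h12 h13 h23.
rewrite !mul3A.
rewrite (mul3_dec (R12E _ _ _ _ _ _)).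
rewrite (mul3_dec (R13E _ _ _ _ _ _)).
rewrite (mul3_dec (R13E _ _ _ _ _ _)).
rewrite !R23E.
rewrite (mul3_dec (R23E _ _ _ _ _ _)).
rewrite (mul3_dec (R13E _ _ _ _ _ _)).
rewrite (mul3_dec (R13E _ _ _ _ _ _)).
rewrite !R12E /=.
prep.
have [?|n1] := eqVneq J (i1, i2, i3); [|
have [?|n2] := eqVneq J (i1, i3, i2); [|
have [?|n3] := eqVneq J (i2, i1, i3); [|
have [?|n4] := eqVneq J (i2, i3, i1); [|
have [?|n5] := eqVneq J (i3, i1, i2); [|
have [?|n6] := eqVneq J (i3, i2, i1); [|
 by (repeat match goal with h : @eq (ordinal _) _ _, n : is_true (_ != _) |- _ => rewrite h in n end);
    (repeat match goal with n : is_true (_ != _) |- _ => rewrite (negbTE n) end);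
    rewrite /= !(mul0r, mulr0, addr0, add0r)
 ]]]]]].
all: subst J.
1: fin. 1: fin. 1: fin. 1: fin. 1: fin. 1: fin.
Qed.

Lemma key6 z z' (i1 i2 i3 : 'I_N) (J : idx3 N) :
  (forall a b : 'I_N, a != b ->
     wdyn tau s a b != 1 /\ (forall c : 'I_N, wdyn tau (sshift s c) a b != 1)) ->
  1 - cexp tau ^+ 2 * z != 0 -> 1 - cexp tau ^+ 2 * z' != 0 -> 1 - cexp tau ^+ 2 * (z * z') != 0 ->
  (i2 < i1)%N -> (i1 < i3)%N -> (i2 < i3)%N ->
    mul3 (mul3 (R12 tau z s true) (R13 tau (z * z') s false)) (R23 tau z' s true) (i1, i2, i3) J
    = mul3 (mul3 (R23 tau z' s false) (R13 tau (z * z') s true)) (R12 tau z s false) (i1, i2, i3) J.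
Proof.
move=> Hw Hz Hz' Hzz h12 h13 h23.
rewrite !mul3A.
rewrite (mul3_dec (R12E _ _ _ _ _ _)).
rewrite (mul3_dec (R13E _ _ _ _ _ _)).
rewrite (mul3_dec (R13E _ _ _ _ _ _)).
rewrite !R23E.
rewrite (mul3_dec (R23E _ _ _ _ _ _)).
rewrite (mul3_dec (R13E _ _ _ _ _ _)).
rewrite (mul3_dec (R13E _ _ _ _ _ _)).
rewrite !R12E /=.
prep.
have [?|n1] := eqVneq J (i1, i2, i3); [|
have [?|n2] := eqVneq J (i1, i3, i2); [|
have [?|n3] := eqVneq J (i2, i1, i3); [|
have [?|n4] := eqVneq J (i2, i3, i1); [|
have [?|n5] := eqVneq J (i3, i1, i2); [|
have [?|n6] := eqVneq J (i3, i2, i1); [|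
 by (repeat match goal with h : @eq (ordinal _) _ _, n : is_true (_ != _) |- _ => rewrite h in n end);
    (repeat match goal with n : is_true (_ != _) |- _ => rewrite (negbTE n) end);
    rewrite /= !(mul0r, mulr0, addr0, add0r)
 ]]]]]].
all: subst J.
1: fin. 1: fin. 1: fin. 1: fin. 1: fin. 1: fin.
Qed.

Lemma key7 z z' (i1 i2 i3 : 'I_N) (J : idx3 N) :
  (forall a b : 'I_N, a != b ->
     wdyn tau s a b != 1 /\ (forall c : 'I_N, wdyn tau (sshift s c) a b != 1)) ->
  1 - cexp tau ^+ 2 * z != 0 -> 1 - cexp tau ^+ 2 * z' != 0 -> 1 - cexp tau ^+ 2 * (z * z') != 0 ->
  (i2 < i1)%N -> (i3 < i1)%N -> (i2 < i3)%N ->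
    mul3 (mul3 (R12 tau z s true) (R13 tau (z * z') s false)) (R23 tau z' s true) (i1, i2, i3) J
    = mul3 (mul3 (R23 tau z' s false) (R13 tau (z * z') s true)) (R12 tau z s false) (i1, i2, i3) J.
Proof.
move=> Hw Hz Hz' Hzz h12 h13 h23.
rewrite !mul3A.
rewrite (mul3_dec (R12E _ _ _ _ _ _)).
rewrite (mul3_dec (R13E _ _ _ _ _ _)).
rewrite (mul3_dec (R13E _ _ _ _ _ _)).
rewrite !R23E.
rewrite (mul3_dec (R23E _ _ _ _ _ _)).
rewrite (mul3_dec (R13E _ _ _ _ _ _)).
rewrite (mul3_dec (R13E _ _ _ _ _ _)).
rewrite !R12E /=.
prep.
have [?|n1] := eqVneq J (i1, i2, i3); [|
have [?|n2] := eqVneq J (i1, i3, i2); [|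
have [?|n3] := eqVneq J (i2, i1, i3); [|
have [?|n4] := eqVneq J (i2, i3, i1); [|
have [?|n5] := eqVneq J (i3, i1, i2); [|
have [?|n6] := eqVneq J (i3, i2, i1); [|
 by (repeat match goal with h : @eq (ordinal _) _ _, n : is_true (_ != _) |- _ => rewrite h in n end);
    (repeat match goal with n : is_true (_ != _) |- _ => rewrite (negbTE n) end);
    rewrite /= !(mul0r, mulr0, addr0, add0r)
 ]]]]]].
all: subst J.
1: fin. 1: fin. 1: fin. 1: fin. 1: fin. 1: fin.
Qed.

Lemma key8 z z' (i1 i2 i3 : 'I_N) (J : idx3 N) :
  (forall a b : 'I_N, a != b ->
     wdyn tau s a b != 1 /\ (forall c : 'I_N, wdyn tau (sshift s c) a b != 1)) ->
  1 - cexp tau ^+ 2 * z != 0 -> 1 - cexp tau ^+ 2 * z' != 0 -> 1 - cexp tau ^+ 2 * (z * z') != 0 ->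
  (i2 < i1)%N -> (i3 < i1)%N -> (i3 < i2)%N ->
    mul3 (mul3 (R12 tau z s true) (R13 tau (z * z') s false)) (R23 tau z' s true) (i1, i2, i3) J
    = mul3 (mul3 (R23 tau z' s false) (R13 tau (z * z') s true)) (R12 tau z s false) (i1, i2, i3) J.
Proof.
move=> Hw Hz Hz' Hzz h12 h13 h23.
rewrite !mul3A.
rewrite (mul3_dec (R12E _ _ _ _ _ _)).
rewrite (mul3_dec (R13E _ _ _ _ _ _)).
rewrite (mul3_dec (R13E _ _ _ _ _ _)).
rewrite !R23E.
rewrite (mul3_dec (R23E _ _ _ _ _ _)).
rewrite (mul3_dec (R13E _ _ _ _ _ _)).
rewrite (mul3_dec (R13E _ _ _ _ _ _)).
rewrite !R12E /=.
prep.
have [?|n1] := eqVneq J (i1, i2, i3); [|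
have [?|n2] := eqVneq J (i1, i3, i2); [|
have [?|n3] := eqVneq J (i2, i1, i3); [|
have [?|n4] := eqVneq J (i2, i3, i1); [|
have [?|n5] := eqVneq J (i3, i1, i2); [|
have [?|n6] := eqVneq J (i3, i2, i1); [|
 by (repeat match goal with h : @eq (ordinal _) _ _, n : is_true (_ != _) |- _ => rewrite h in n end);
    (repeat match goal with n : is_true (_ != _) |- _ => rewrite (negbTE n) end);
    rewrite /= !(mul0r, mulr0, addr0, add0r)
 ]]]]]].
all: subst J.
1: fin. 1: fin. 1: fin. 1: fin. 1: fin. 1: fin.
Qed.

Lemma key9 z z' (i1 i2 i3 : 'I_N) (J : idx3 N) :
  (forall a b : 'I_N, a != b ->
     wdyn tau s a b != 1 /\ (forall c : 'I_N, wdyn tau (sshift s c) a b != 1)) ->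
  1 - cexp tau ^+ 2 * z != 0 -> 1 - cexp tau ^+ 2 * z' != 0 -> 1 - cexp tau ^+ 2 * (z * z') != 0 ->
  (i2 < i1)%N -> (i3 < i1)%N -> (i2 : nat) = i3 ->
    mul3 (mul3 (R12 tau z s true) (R13 tau (z * z') s false)) (R23 tau z' s true) (i1, i2, i3) J
    = mul3 (mul3 (R23 tau z' s false) (R13 tau (z * z') s true)) (R12 tau z s false) (i1, i2, i3) J.
Proof.
move=> Hw Hz Hz' Hzz h12 h13 h23.
rewrite !mul3A.
rewrite (mul3_dec (R12E _ _ _ _ _ _)).
rewrite (mul3_dec (R13E _ _ _ _ _ _)).
rewrite (mul3_dec (R13E _ _ _ _ _ _)).
rewrite !R23E.
rewrite (mul3_dec (R23E _ _ _ _ _ _)).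
rewrite (mul3_dec (R13E _ _ _ _ _ _)).
rewrite (mul3_dec (R13E _ _ _ _ _ _)).
rewrite !R12E /=.
prep.
have [?|n1] := eqVneq J (i1, i2, i3); [|
have [?|n2] := eqVneq J (i1, i3, i2); [|
have [?|n3] := eqVneq J (i2, i1, i3); [|
have [?|n4] := eqVneq J (i2, i3, i1); [|
have [?|n5] := eqVneq J (i3, i1, i2); [|
have [?|n6] := eqVneq J (i3, i2, i1); [|
 by (repeat match goal with h : @eq (ordinal _) _ _, n : is_true (_ != _) |- _ => rewrite h in n end);
    (repeat match goal with n : is_true (_ != _) |- _ => rewrite (negbTE n) end);
    rewrite /= !(mul0r, mulr0, addr0, add0r)
 ]]]]]].
all: subst J.
1: fin. 1: fin. 1: fin. 1: fin. 1: fin. 1: fin.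
Qed.

Lemma key10 z z' (i1 i2 i3 : 'I_N) (J : idx3 N) :
  (forall a b : 'I_N, a != b ->
     wdyn tau s a b != 1 /\ (forall c : 'I_N, wdyn tau (sshift s c) a b != 1)) ->
  1 - cexp tau ^+ 2 * z != 0 -> 1 - cexp tau ^+ 2 * z' != 0 -> 1 - cexp tau ^+ 2 * (z * z') != 0 ->
  (i2 < i1)%N -> (i1 : nat) = i3 -> (i2 < i3)%N ->
    mul3 (mul3 (R12 tau z s true) (R13 tau (z * z') s false)) (R23 tau z' s true) (i1, i2, i3) J
    = mul3 (mul3 (R23 tau z' s false) (R13 tau (z * z') s true)) (R12 tau z s false) (i1, i2, i3) J.
Proof.
move=> Hw Hz Hz' Hzz h12 h13 h23.
rewrite !mul3A.
rewrite (mul3_dec (R12E _ _ _ _ _ _)).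
rewrite (mul3_dec (R13E _ _ _ _ _ _)).
rewrite (mul3_dec (R13E _ _ _ _ _ _)).
rewrite !R23E.
rewrite (mul3_dec (R23E _ _ _ _ _ _)).
rewrite (mul3_dec (R13E _ _ _ _ _ _)).
rewrite (mul3_dec (R13E _ _ _ _ _ _)).
rewrite !R12E /=.
prep.
have [?|n1] := eqVneq J (i1, i2, i3); [|
have [?|n2] := eqVneq J (i1, i3, i2); [|
have [?|n3] := eqVneq J (i2, i1, i3); [|
have [?|n4] := eqVneq J (i2, i3, i1); [|
have [?|n5] := eqVneq J (i3, i1, i2); [|
have [?|n6] := eqVneq J (i3, i2, i1); [|
 by (repeat match goal with h : @eq (ordinal _) _ _, n : is_true (_ != _) |- _ => rewrite h in n end);
    (repeat match goal with n : is_true (_ != _) |- _ => rewrite (negbTE n) end);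
    rewrite /= !(mul0r, mulr0, addr0, add0r)
 ]]]]]].
all: subst J.
1: fin. 1: fin. 1: fin. 1: fin. 1: fin. 1: fin.
Qed.

Lemma key11 z z' (i1 i2 i3 : 'I_N) (J : idx3 N) :
  (forall a b : 'I_N, a != b ->
     wdyn tau s a b != 1 /\ (forall c : 'I_N, wdyn tau (sshift s c) a b != 1)) ->
  1 - cexp tau ^+ 2 * z != 0 -> 1 - cexp tau ^+ 2 * z' != 0 -> 1 - cexp tau ^+ 2 * (z * z') != 0 ->
  (i1 : nat) = i2 -> (i1 < i3)%N -> (i2 < i3)%N ->
    mul3 (mul3 (R12 tau z s true) (R13 tau (z * z') s false)) (R23 tau z' s true) (i1, i2, i3) J
    = mul3 (mul3 (R23 tau z' s false) (R13 tau (z * z') s true)) (R12 tau z s false) (i1, i2, i3) J.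
Proof.
move=> Hw Hz Hz' Hzz h12 h13 h23.
rewrite !mul3A.
rewrite (mul3_dec (R12E _ _ _ _ _ _)).
rewrite (mul3_dec (R13E _ _ _ _ _ _)).
rewrite (mul3_dec (R13E _ _ _ _ _ _)).
rewrite !R23E.
rewrite (mul3_dec (R23E _ _ _ _ _ _)).
rewrite (mul3_dec (R13E _ _ _ _ _ _)).
rewrite (mul3_dec (R13E _ _ _ _ _ _)).
rewrite !R12E /=.
prep.
have [?|n1] := eqVneq J (i1, i2, i3); [|
have [?|n2] := eqVneq J (i1, i3, i2); [|
have [?|n3] := eqVneq J (i2, i1, i3); [|
have [?|n4] := eqVneq J (i2, i3, i1); [|
have [?|n5] := eqVneq J (i3, i1, i2); [|
have [?|n6] := eqVneq J (i3, i2, i1); [|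
 by (repeat match goal with h : @eq (ordinal _) _ _, n : is_true (_ != _) |- _ => rewrite h in n end);
    (repeat match goal with n : is_true (_ != _) |- _ => rewrite (negbTE n) end);
    rewrite /= !(mul0r, mulr0, addr0, add0r)
 ]]]]]].
all: subst J.
1: fin. 1: fin. 1: fin. 1: fin. 1: fin. 1: fin.
Qed.

Lemma key12 z z' (i1 i2 i3 : 'I_N) (J : idx3 N) :
  (forall a b : 'I_N, a != b ->
     wdyn tau s a b != 1 /\ (forall c : 'I_N, wdyn tau (sshift s c) a b != 1)) ->
  1 - cexp tau ^+ 2 * z != 0 -> 1 - cexp tau ^+ 2 * z' != 0 -> 1 - cexp tau ^+ 2 * (z * z') != 0 ->
  (i1 : nat) = i2 -> (i3 < i1)%N -> (i3 < i2)%N ->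
    mul3 (mul3 (R12 tau z s true) (R13 tau (z * z') s false)) (R23 tau z' s true) (i1, i2, i3) J
    = mul3 (mul3 (R23 tau z' s false) (R13 tau (z * z') s true)) (R12 tau z s false) (i1, i2, i3) J.
Proof.
move=> Hw Hz Hz' Hzz h12 h13 h23.
rewrite !mul3A.
rewrite (mul3_dec (R12E _ _ _ _ _ _)).
rewrite (mul3_dec (R13E _ _ _ _ _ _)).
rewrite (mul3_dec (R13E _ _ _ _ _ _)).
rewrite !R23E.
rewrite (mul3_dec (R23E _ _ _ _ _ _)).
rewrite (mul3_dec (R13E _ _ _ _ _ _)).
rewrite (mul3_dec (R13E _ _ _ _ _ _)).
rewrite !R12E /=.
prep.
have [?|n1] := eqVneq J (i1, i2, i3); [|
have [?|n2] := eqVneq J (i1, i3, i2); [|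
have [?|n3] := eqVneq J (i2, i1, i3); [|
have [?|n4] := eqVneq J (i2, i3, i1); [|
have [?|n5] := eqVneq J (i3, i1, i2); [|
have [?|n6] := eqVneq J (i3, i2, i1); [|
 by (repeat match goal with h : @eq (ordinal _) _ _, n : is_true (_ != _) |- _ => rewrite h in n end);
    (repeat match goal with n : is_true (_ != _) |- _ => rewrite (negbTE n) end);
    rewrite /= !(mul0r, mulr0, addr0, add0r)
 ]]]]]].
all: subst J.
1: fin. 1: fin. 1: fin. 1: fin. 1: fin. 1: fin.
Qed.

Lemma key13 z z' (i1 i2 i3 : 'I_N) (J : idx3 N) :
  (forall a b : 'I_N, a != b ->
     wdyn tau s a b != 1 /\ (forall c : 'I_N, wdyn tau (sshift s c) a b != 1)) ->
  1 - cexp tau ^+ 2 * z != 0 -> 1 - cexp tau ^+ 2 * z' != 0 -> 1 - cexp tau ^+ 2 * (z * z') != 0 ->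
  (i1 : nat) = i2 -> (i1 : nat) = i3 -> (i2 : nat) = i3 ->
    mul3 (mul3 (R12 tau z s true) (R13 tau (z * z') s false)) (R23 tau z' s true) (i1, i2, i3) J
    = mul3 (mul3 (R23 tau z' s false) (R13 tau (z * z') s true)) (R12 tau z s false) (i1, i2, i3) J.
Proof.
move=> Hw Hz Hz' Hzz h12 h13 h23.
rewrite !mul3A.
rewrite (mul3_dec (R12E _ _ _ _ _ _)).
rewrite (mul3_dec (R13E _ _ _ _ _ _)).
rewrite (mul3_dec (R13E _ _ _ _ _ _)).
rewrite !R23E.
rewrite (mul3_dec (R23E _ _ _ _ _ _)).
rewrite (mul3_dec (R13E _ _ _ _ _ _)).
rewrite (mul3_dec (R13E _ _ _ _ _ _)).
rewrite !R12E /=.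
prep.
have [?|n1] := eqVneq J (i1, i2, i3); [|
have [?|n2] := eqVneq J (i1, i3, i2); [|
have [?|n3] := eqVneq J (i2, i1, i3); [|
have [?|n4] := eqVneq J (i2, i3, i1); [|
have [?|n5] := eqVneq J (i3, i1, i2); [|
have [?|n6] := eqVneq J (i3, i2, i1); [|
 by (repeat match goal with h : @eq (ordinal _) _ _, n : is_true (_ != _) |- _ => rewrite h in n end);
    (repeat match goal with n : is_true (_ != _) |- _ => rewrite (negbTE n) end);
    rewrite /= !(mul0r, mulr0, addr0, add0r)
 ]]]]]].
all: subst J.
1: fin. 1: fin. 1: fin. 1: fin. 1: fin. 1: fin.
Qed.

Lemma expand z z' (I J : idx3 N) :
  (forall a b : 'I_N, a != b ->
     wdyn tau s a b != 1 /\ (forall c : 'I_N, wdyn tau (sshift s c) a b != 1)) ->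
  1 - cexp tau ^+ 2 * z != 0 -> 1 - cexp tau ^+ 2 * z' != 0 -> 1 - cexp tau ^+ 2 * (z * z') != 0 ->
    mul3 (mul3 (R12 tau z s true) (R13 tau (z * z') s false)) (R23 tau z' s true) I J
    = mul3 (mul3 (R23 tau z' s false) (R13 tau (z * z') s true)) (R12 tau z s false) I J.
Proof.
move=> Hw Hz Hz' Hzz; case: I => [[i1 i2] i3].
case: (ltngtP i1 i2) => h12; case: (ltngtP i1 i3) => h13; case: (ltngtP i2 i3) => h23;
  try (exfalso; clear -h12 h13 h23; lia).
all: first [ exact: (key1 _ _ _ _ _ _ Hw Hz Hz' Hzz h12 h13 h23) | exact: (key2 _ _ _ _ _ _ Hw Hz Hz' Hzz h12 h13 h23) | exact: (key3 _ _ _ _ _ _ Hw Hz Hz' Hzz h12 h13 h23) | exact: (key4 _ _ _ _ _ _ Hw Hz Hz' Hzz h12 h13 h23) | exact: (key5 _ _ _ _ _ _ Hw Hz Hz' Hzz h12 h13 h23) | exact: (key6 _ _ _ _ _ _ Hw Hz Hz' Hzz h12 h13 h23) | exact: (key7 _ _ _ _ _ _ Hw Hz Hz' Hzz h12 h13 h23) | exact: (key8 _ _ _ _ _ _ Hw Hz Hz' Hzz h12 h13 h23) | exact: (key9 _ _ _ _ _ _ Hw Hz Hz' Hzz h12 h13 h23) | exact: (key10 _ _ _ _ _ _ Hw Hz Hz' Hzz h12 h13 h23) | exact: (key11 _ _ _ _ _ _ Hw Hz Hz' Hzz h12 h13 h23) | exact: (key12 _ _ _ _ _ _ Hw Hz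 Hz' Hzz h12 h13 h23) | exact: (key13 _ _ _ _ _ _ Hw Hz Hz' Hzz h12 h13 h23) ].
Qed.
End S.

Theorem mainTheorem3 (R : realType) (N : nat) (tau : R[i])
    (s : 'I_(N - 1) -> R[i]) (z z' : R[i]) :
  (2 <= N)%N ->
  `|cexp tau| < 1 ->
  (forall a b : 'I_N, a != b ->
     wdyn tau s a b != 1 /\ (forall c : 'I_N, wdyn tau (sshift s c) a b != 1)) ->
  (forall y : R[i], y \in [:: z; z'; z * z'] ->
     [/\ 1 - cexp tau ^+ 2 * y != 0,
         qpoch y (cexp tau ^+ (2 * N)) != 0 &
         qpoch (cexp tau ^+ (2 * N) * y) (cexp tau ^+ (2 * N)) != 0]) ->
  forall I J : idx3 N,
    mul3 (mul3 (R12 tau z s true) (R13 tau (z * z') s false)) (R23 tau z' s true) I J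
    = mul3 (mul3 (R23 tau z' s false) (R13 tau (z * z') s true)) (R12 tau z s false) I J.
Proof.
move=> N2 _ Hw Hg I J.
have [hz _ _] := Hg z (mem_head _ _).
have hm' : z' \in [:: z; z'; z * z'] by rewrite !inE eqxx orbT.
have [hz' _ _] := Hg z' hm'.
have hmm : z * z' \in [:: z; z'; z * z'] by rewrite !inE eqxx !orbT.
have [hzz _ _] := Hg (z * z') hmm.
exact: (@expand R N N2 tau s z z' I J Hw hz hz' hzz).
Qed.
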